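(* Let $\mathfrak g$ be a Lie algebra with a classical $r$-matrix $R$ and post-Lie product $x\triangleright y=[R_-x,y]$. For all $A,B\in\mathcal U(\mathfrak g)$, $$A\ast B=R_+(A'_{(1)})\,B\,S_{\mathfrak g}\big(R_-(A'_{(2)})\big),$$ where $A'\in\mathcal U(\mathfrak g_R)$ is the unique element with $F(A')=A$ and $\Delta_{\mathfrak g_R}(A')=A'_{(1)}\otimes A'_{(2)}$.
   Context: All vector spaces are finite dimensional over $\mathbb K=\mathbb R$ or $\mathbb C$. Let $\mathfrak g=(V,[\cdot,\cdot])$ be a Lie algebra. A classical $r$-matrix is a linear map $R:V\to V$ satisfying $[Rx,Ry]=R([Rx,y]+[x,Ry])-[x,y]$ for all $x,y$. Then $[x,y]_R:=\frac12([Rx,y]+[x,Ry])$ is a Lie bracket; $\mathfrak g_R:=(V,[\cdot,\cdot]_R)$. The maps $R_\pm:=\frac12(R\pm\mathrm{id})$ are Lie algebra morphisms $\mathfrak g_R\to\mathfrak g$, extended (same notation) to unital algebra morphisms $\mathcal U(\mathfrak g_R)\to\mathcal U(\mathfrak g)$. $\Delta_{\mathfrak g_R}$: coproduct of $\mathcal U(\mathfrak g_R)$; $m_{\mathfrak g}$, $S_{\mathfrak g}$, $\epsilon$: product, antipode, counit of $\mathcal U(\mathfrak g)$; Sweedler notation. $F:=m_{\mathfrak g}\circ(\mathrm{id}\otimes S_{\mathfrak g})\circ(R_+\otimes R_-)\circ\Delta_{\mathfrak g_R}:\mathcal U(\mathfrak g_R)\to\mathcal U(\mathfrak g)$, a linear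 isomorphism. The product $x\triangleright y:=[R_-x,y]$ is a post-Lie product on $\mathfrak g$ and extends uniquely to $\mathcal U(\mathfrak g)$ with $\mathbf 1\triangleright A=A$, $A\triangleright\mathbf 1=\epsilon(A)\mathbf 1$, $xA\triangleright B=x\triangleright(A\triangleright B)-(x\triangleright A)\triangleright B$, $A\triangleright BC=(A_{(1)}\triangleright B)(A_{(2)}\triangleright C)$ ($x\in V$). Define $A\ast B:=A_{(1)}(A_{(2)}\triangleright B)$. *)

(* Defs.v *)
From HB Require Import structures.
From mathcomp Require Import all_boot all_order all_algebra.
Set Implicit Arguments. Unset Strict Implicit. Unset Printing Implicit Defensive.
Import Order.TTheory GRing.Theory Num.Theory.
Local Open Scope ring_scope.

Section Defs.
Variable K : numFieldType.

Definition lin (X Y : lmodType K) (f : X -> Y) :=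
  forall (a : K) (u v : X), f (a *: u + v) = a *: f u + f v.

Definition linK (X : lmodType K) (f : X -> K) :=
  forall (a : K) (u v : X), f (a *: u + v) = a * f u + f v.

Definition bilin (X Y W : lmodType K) (b : X -> Y -> W) :=
  (forall u, lin (b u)) /\ (forall v, lin (fun u => b u v)).

Definition alg_morph (A B : algType K) (f : A -> B) :=
  [/\ lin f, f 1 = 1 & forall a b, f (a * b) = f a * f b].

Definition is_lie_algebra (V : lmodType K) (br : V -> V -> V) :=
  [/\ bilin br, (forall x, br x x = 0) &
      forall x y z, br x (br y z) + br y (br z x) + br z (br x y) = 0].

Definition is_r_matrix (V : lmodType K) (br : V -> V -> V) (R : V -> V) :=
  lin R /\ forall x y, br (R x) (R y) = R (br (R x) y + br x (R y)) - br x y.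

Definition brR (V : lmodType K) (br : V -> V -> V) (R : V -> V) (x y : V) : V :=
  (2%:R)^-1 *: (br (R x) y + br x (R y)).
Definition Rplus (V : lmodType K) (R : V -> V) (x : V) : V := (2%:R)^-1 *: (R x + x).
Definition Rminus (V : lmodType K) (R : V -> V) (x : V) : V := (2%:R)^-1 *: (R x - x).

Definition is_UEA (V : lmodType K) (br : V -> V -> V) (U : algType K) (i : V -> U) :=
  [/\ lin i, (forall x y, i (br x y) = i x * i y - i y * i x) &
   forall (A : algType K) (f : V -> A), lin f ->
     (forall x y, f (br x y) = f x * f y - f y * f x) ->
     exists phi : U -> A, [/\ alg_morph phi, (forall x, phi (i x) = f x) &
       forall psi : U -> A, alg_morph psi -> (forall x, psi (i x) = f x) ->
         forall u, psi u = phi u]].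

Definition is_tensor_alg (U T : algType K) (t : U -> U -> T) :=
  [/\ bilin t,
   (forall (X : lmodType K) (b : U -> U -> X), bilin b ->
     exists l : T -> X, [/\ lin l, (forall a c, l (t a c) = b a c) &
       forall l' : T -> X, lin l' -> (forall a c, l' (t a c) = b a c) ->
         forall z, l' z = l z]),
   t 1 1 = 1 &
   forall a c a' c', t a c * t a' c' = t (a * a') (c * c')].

Definition is_coproduct (V : lmodType K) (U T : algType K) (i : V -> U)
    (t : U -> U -> T) (D : U -> T) :=
  alg_morph D /\ forall x, D (i x) = t (i x) 1 + t 1 (i x).

Definition is_antipode (V : lmodType K) (U : algType K) (i : V -> U) (S : U -> U) :=
  [/\ lin S, S 1 = 1, (forall a b, S (a * b) = S b * S a) &
      forall x, S (i x) = - i x].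

Definition is_counit (V : lmodType K) (U : algType K) (i : V -> U) (eps : U -> K) :=
  [/\ linK eps, eps 1 = 1, (forall a b, eps (a * b) = eps a * eps b) &
      forall x, eps (i x) = 0].

Definition extends_morph (V : lmodType K) (UR U : algType K) (iR : V -> UR)
    (i : V -> U) (f : V -> V) (phi : UR -> U) :=
  alg_morph phi /\ forall x, phi (iR x) = i (f x).

(* tri is the extension to U(g) of the post-Lie product x |> y = [R_- x, y] *)
Definition is_postLie_ext (V : lmodType K) (br : V -> V -> V) (R : V -> V)
    (U T : algType K) (i : V -> U) (t : U -> U -> T) (D : U -> T)
    (eps : U -> K) (tri : U -> U -> U) :=
  bilin tri /\ [/\
      (forall x y, tri (i x) (i y) = i (br (Rminus R x) y)),
      (forall A, tri 1 A = A),
      (forall A, tri A 1 = eps A *: 1),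
      (forall x A B, tri (i x * A) B = tri (i x) (tri A B) - tri (tri (i x) A) B) &
      (forall A B C (N : T -> U), lin N ->
         (forall a c, N (t a c) = tri a B * tri c C) ->
         tri A (B * C) = N (D A))].

End Defs.

(* Main.v *)
Require Import Defs.
From HB Require Import structures.
From mathcomp Require Import all_boot all_order all_algebra.
From Stdlib Require Import ClassicalEpsilon.
Set Implicit Arguments. Unset Strict Implicit. Unset Printing Implicit Defensive.
Import GRing.Theory.
Local Open Scope ring_scope.

Definition pb (P : Prop) : bool := if excluded_middle_informative P then true else false.
Lemma pbP (P : Prop) : pb P <-> P.
Proof. by rewrite /pb; case: excluded_middle_informative. Qed.

Section Ind.
Variables (K : numFieldType) (V : lmodType K) (br : V -> V -> V) (U : algType K) (i : V -> U).
Variable P : U -> Prop.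
Hypothesis HU : is_UEA br i.
Hypothesis P1 : P 1.
Hypothesis Plin : forall a u v, P u -> P v -> P (a *: u + v).
Hypothesis Pmul : forall u v, P u -> P v -> P (u * v).
Hypothesis Pi : forall x, P (i x).

Definition Pset : pred U := fun u => pb (P u).
Lemma Pset_closed : subalg_closed Pset.
Proof.
split; first by apply/pbP.
  by move=> a u v /pbP Hu /pbP Hv; apply/pbP; apply Plin.
by move=> u v /pbP Hu /pbP Hv; apply/pbP; apply Pmul.
Qed.

Record Sub := MkSub { sval : U; _ : sval \in Pset }.
HB.instance Definition _ := [isSub for sval].
HB.instance Definition _ := [Choice of Sub by <:].
HB.instance Definition _ := GRing.SubChoice_isSubAlgebra.Build K U Pset Sub (GRing.subalg_closed_semi Pset_closed).

Lemma UEA_ind u : P u.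
Proof.
case: HU => Hlin Hbr Huniv.
have Pix x : i x \in Pset by apply/pbP.
pose f x : Sub := MkSub (Pix x).
have flin : lin f.
  move=> a u1 v1; apply: val_inj => /=; rewrite Hlin //.
have fbr : forall x y, f (br x y) = f x * f y - f y * f x.
  move=> x y; apply: val_inj => /=; by rewrite Hbr.
have [phi [[phil phi1 phim] phii phiu]] := Huniv _ f flin fbr.
have [id0 [_ _ id0u]] := Huniv _ i Hlin Hbr.
have ida : alg_morph (fun u : U => u) by [].
have va : alg_morph (fun u => sval (phi u)).
  split.
  - by move=> a u1 v1; rewrite phil.
  - by rewrite phi1.
  - by move=> a b; rewrite phim.
have e1 := id0u _ ida (fun x => erefl) u.
have e2 := id0u _ va (fun x => congr1 sval (phii x)) u.
have : sval (phi u) \in Pset by case: (phi u).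
by rewrite e2 -e1 => /pbP.
Qed.
End Ind.
Section Lin.
Variables (K : numFieldType) (X Y : lmodType K) (f : X -> Y) (hf : lin f).
Lemma lin0 : f 0 = 0.
Proof. have := hf 1 0 0; rewrite scale1r addr0 => /(congr1 (fun w => w - f 0)) /=; by rewrite subrr addrK scale1r. Qed.
Lemma linD u v : f (u + v) = f u + f v.
Proof. by have := hf 1 u v; rewrite !scale1r. Qed.
Lemma linZ a u : f (a *: u) = a *: f u.
Proof. by have := hf a u 0; rewrite !addr0 lin0 addr0. Qed.
Lemma linN u : f (- u) = - f u.
Proof. by rewrite -scaleN1r linZ scaleN1r. Qed.
Lemma linB u v : f (u - v) = f u - f v.
Proof. by rewrite linD linN. Qed.
End Lin.

Lemma UEA_lind (K : numFieldType) (V : lmodType K) (br : V -> V -> V) (U : algType K) (i : V -> U)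
  (Q : U -> Prop) : is_UEA br i -> Q 1 -> (forall a u v, Q u -> Q v -> Q (a *: u + v)) ->
  (forall x u, Q u -> Q (i x * u)) -> forall u, Q u.
Proof.
move=> HU Q1 Ql Qm u.
suff: forall v, Q v -> Q (u * v) by move/(_ 1 Q1); rewrite mulr1.
apply: (UEA_ind (P := fun u => forall v, Q v -> Q (u * v))) HU _ _ _ _ u.
- by move=> v; rewrite mul1r.
- by move=> a u1 v1 H1 H2 w Hw; rewrite mulrDl -scalerAl; apply: Ql; auto.
- by move=> u1 v1 H1 H2 w Hw; rewrite -mulrA; auto.
- by move=> x v; apply: Qm.
Qed.

Lemma tensor_ext (K : numFieldType) (U T : algType K) (t : U -> U -> T) (X : lmodType K)
  (f g : T -> X) : is_tensor_alg t -> lin f -> lin g ->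
  (forall a c, f (t a c) = g (t a c)) -> forall z, f z = g z.
Proof.
case=> [[tl tr] univ _ _] hf hg fg z.
have bb : bilin (fun a c => f (t a c)).
  split=> [u|v] a x y /=; first by rewrite tl hf.
  by rewrite (tr v) hf.
have [l [ll lb lu]] := univ _ _ bb.
by rewrite (lu f hf (fun _ _ => erefl)) (lu g hg (fun a c => esym (fg a c))).
Qed.

Section LinH.
Variable K : numFieldType.
Lemma lin_comp (X Y Z : lmodType K) (f : Y -> Z) (g : X -> Y) : lin f -> lin g -> lin (fun z => f (g z)).
Proof. by move=> hf hg a u v; rewrite hg hf. Qed.
Lemma lin_lmul (A : algType K) (p : A) : lin (fun z => p * z).
Proof. by move=> a u v; rewrite mulrDr scalerAr. Qed.
Lemma lin_rmul (A : algType K) (p : A) : lin (fun z => z * p).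
Proof. by move=> a u v; rewrite mulrDl scalerAl. Qed.
Lemma lin_sub (X Y : lmodType K) (f g : X -> Y) : lin f -> lin g -> lin (fun z => f z - g z).
Proof.
move=> hf hg a u v; rewrite hf hg scalerBr.
by rewrite opprD !addrA; congr (_ + _); rewrite addrAC.
Qed.
End LinH.
Lemma zl (G : zmodType) (Y W P Rr : G) : Y + (W - P + Rr) - (W + Rr) = Y - P.
Proof. by rewrite -addrA (addrAC W) addrAC subrr add0r. Qed.
Theorem mainTheorem11 (K : numFieldType) (V : vectType K)
  (br : V -> V -> V) (R : V -> V)
  (U : algType K) (i : V -> U) (UR : algType K) (iR : V -> UR)
  (T : algType K) (t : U -> U -> T) (TR : algType K) (tR : UR -> UR -> TR)
  (D : U -> T) (DR : UR -> TR) (S : U -> U) (eps : U -> K)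
  (Rp Rm : UR -> U) (LF : TR -> U) (tri : U -> U -> U) :
  is_lie_algebra br -> is_r_matrix br R ->
  is_UEA br i -> is_UEA (brR br R) iR ->
  is_tensor_alg t -> is_tensor_alg tR ->
  is_coproduct i t D -> is_coproduct iR tR DR ->
  is_antipode i S -> is_counit i eps ->
  extends_morph iR i (Rplus R) Rp -> extends_morph iR i (Rminus R) Rm ->
  lin LF -> (forall a c, LF (tR a c) = Rp a * S (Rm c)) ->
  is_postLie_ext br R i t D eps tri ->
  forall (A B : U) (A' : UR), LF (DR A') = A ->
  forall M : T -> U, lin M -> (forall a c, M (t a c) = a * tri c B) ->
  forall L : TR -> U, lin L -> (forall a c, L (tR a c) = Rp a * B * S (Rm c)) ->
  M (D A) = L (DR A').
Proof.
move=> _ _ HU HUR Ht HtR [[Dl D1 Dm] Di] [[DRl DR1 DRm] DRi] [Sl S1 Sm Si] [_ eps1 _ epsi]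
  [[Rpl Rp1 Rpm] Rpi] [[Rml Rm1 Rmm] Rmi] LFl LFt [[tril trir] [tri_ii tri1A triA1 tri4 tri5]]
  A B A' eA M Ml Mt L Ll Lt.
have HU' := HU; case: HU' => il ibr _.
have Ht' := Ht; case: Ht' => [[tl tr] tuniv t11 tmul].
have HtR' := HtR; case: HtR' => [[tRl tRr] _ tR11 tRmul].
have deriv : forall x C, tri (i x) C = i (Rminus R x) * C - C * i (Rminus R x).
  move=> x; apply: (UEA_ind (P := fun C => tri (i x) C = i (Rminus R x) * C - C * i (Rminus R x))) HU _ _ _ _.
  - by rewrite triA1 epsi scale0r mulr1 mul1r subrr.
  - move=> a u v Hu Hv; rewrite (tril (i x)) Hu Hv mulrDr mulrDl -scalerAr -scalerAl.
    by rewrite scalerBr opprD addrACA.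
  - move=> u v Hu Hv.
    pose b a c := tri a u * tri c v.
    have bb : bilin b.
      split=> [p|q] a y z; rewrite /b.
      - by rewrite (trir v) mulrDr scalerAr.
      - by rewrite (trir u) mulrDl scalerAl.
    have [N [Nl Nt _]] := tuniv _ b bb.
    rewrite (tri5 _ _ _ N Nl Nt) Di (linD Nl) !Nt /b !tri1A Hu Hv.
    rewrite mulrBl mulrBr !mulrA; set w := i (Rminus R x).
    by rewrite addrA subrK.
  - by move=> y; rewrite tri_ii ibr.
have RpmE : forall x, i (Rplus R x) = i x + i (Rminus R x).
  move=> x; rewrite -(linD il); congr (i _); rewrite /Rplus /Rminus.
  have h2 : (2%:R)^-1 + (2%:R)^-1 = 1 :> K by rewrite {3}(Num.Theory.splitr (1:K)) mul1r.
  rewrite scalerDr scalerBr addrCA; congr (_ + _).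
  move: h2; set h := (2%:R)^-1 => h2.
  by rewrite -{2}[x]scale1r -h2 scalerDl addrK.
have key : forall x C, M (D (i (Rplus R x) * C - C * i (Rminus R x))) =
    i (Rplus R x) * M (D C) - M (D C) * i (Rminus R x).
  move=> x C; rewrite (linB Dl) !Dm !Di.
  move: (D C) => z.
  have pure : forall a c, M ((t (i (Rplus R x)) 1 + t 1 (i (Rplus R x))) * t a c - t a c * (t (i (Rminus R x)) 1 + t 1 (i (Rminus R x))))
     = i (Rplus R x) * M (t a c) - M (t a c) * i (Rminus R x).
    move=> a c; rewrite mulrDl mulrDr !tmul !mul1r !mulr1 (linB Ml) !(linD Ml) !Mt.
    have e : tri (i (Rplus R x) * c) B = tri (i x) (tri c B) - tri (tri (i x) c) B + tri (i (Rminus R x) * c) B.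
      by rewrite RpmE mulrDl (linD (trir B)) tri4.
    rewrite e !deriv (linB (trir B)).
    set y := i (Rplus R x); set w := i (Rminus R x).
    set p := tri c B; set q := tri (w * c) B; set r := tri (c * w) B.
    rewrite opprB -(addrA (w * p - p * w)) subrK mulrDr mulrBr !mulrA.
    exact: zl.
  exact: (tensor_ext Ht (lin_comp Ml (lin_sub (lin_lmul _) (lin_rmul _)))
     (lin_sub (lin_comp (lin_lmul _) Ml) (lin_comp (lin_rmul _) Ml)) pure).
have LFE : forall x z, LF ((tR (iR x) 1 + tR 1 (iR x)) * z) = i (Rplus R x) * LF z - LF z * i (Rminus R x).
  move=> x; apply: (tensor_ext HtR (lin_comp LFl (lin_lmul _))
     (lin_sub (lin_comp (lin_lmul _) LFl) (lin_comp (lin_rmul _) LFl))).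
  move=> a c /=; rewrite mulrDl !tRmul !mul1r (linD LFl) !LFt Rpm Rmm Sm Rpi Rmi Si !mulrN !mulrA.
  done.
have LE : forall x z, L ((tR (iR x) 1 + tR 1 (iR x)) * z) = i (Rplus R x) * L z - L z * i (Rminus R x).
  move=> x; apply: (tensor_ext HtR (lin_comp Ll (lin_lmul _))
     (lin_sub (lin_comp (lin_lmul _) Ll) (lin_comp (lin_rmul _) Ll))).
  move=> a c /=; rewrite mulrDl !tRmul !mul1r (linD Ll) !Lt Rpm Rmm Sm Rpi Rmi Si !mulrN !mulrA.
  done.
have main : forall A', M (D (LF (DR A'))) = L (DR A').
  apply: (UEA_lind (Q := fun A' => M (D (LF (DR A'))) = L (DR A'))) HUR _ _ _.
  - rewrite DR1 -tR11 LFt Rp1 Rm1 S1 mulr1 D1 -t11 Mt tri1A mul1r Lt Rp1 Rm1 S1 mulr1 mul1r.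
    done.
  - move=> a u v Hu Hv; rewrite DRl LFl Dl Ml Ll Hu Hv; done.
  - by move=> x u IH; rewrite DRm DRi LFE key IH LE.
by rewrite -eA main.
Qed.
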